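(* Let $G(\circ)$, $G(\ast)$ be groups on $G$ with the same neutral element $1$, and let $f:G\to G$ be a bijection such that $\mathrm{dist}([\circ],[\ast])=\mathrm{dist}(\circ_f,\ast)$. Then either $f(1)=1$, or else $\circ_f=\ast_\ell$ for some transposition $\ell$ of $G$ and $\mathrm{dist}([\circ],[\ast])=\mathrm{dist}(\ast_\ell,\ast)$.
   Context: $G$ is a finite set. For group operations $\circ,\ast$ on $G$, $\mathrm{dist}(\circ,\ast)=|\{(a,b)\in G\times G: a\circ b\ne a\ast b\}|$. For a bijection $f:G\to G$, $\circ_f$ is the operation $a\circ_f b=f(f^{-1}(a)\circ f^{-1}(b))$ (so $f:G(\circ)\to G(\circ_f)$ is an isomorphism). $[\circ]$ is the set of all group operations on $G$ giving groups isomorphic to $G(\circ)$, and $\mathrm{dist}([\circ],[\ast])=\min\{\mathrm{dist}(\bullet,\star): \bullet\in[\circ],\ \star\in[\ast],\ G(\bullet)\ne G(\star)\}$. *)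

(* Defs.v *)
From mathcomp Require Import all_boot all_fingroup.
Set Implicit Arguments. Unset Strict Implicit. Unset Printing Implicit Defensive.

Section Defs.
Variable T : finType.

Definition is_group_op (op : T -> T -> T) : Prop :=
  associative op /\
  exists e : T, [/\ left_id e op, right_id e op &
                    forall a, exists b, op a b = e /\ op b a = e].

Definition dist (op1 op2 : T -> T -> T) : nat :=
  #|[set p : T * T | op1 p.1 p.2 != op2 p.1 p.2]|.

Definition conj_op (f : {perm T}) (op : T -> T -> T) : T -> T -> T :=
  fun a b => f (op (f^-1%g a) (f^-1%g b)).

Definition in_iso_class (op op' : T -> T -> T) : Prop :=
  is_group_op op' /\
  exists h : {perm T}, forall a b, h (op a b) = op' (h a) (h b).

(* class_dist_is o s d  <->  dist([o],[s]) = d, i.e. d is the minimum of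
   dist(b, t) over b in [o], t in [s] with b <> t (as operations). *)
Definition class_dist_is (o s : T -> T -> T) (d : nat) : Prop :=
  (exists b t, [/\ in_iso_class o b, in_iso_class s t,
                   b <> t & dist b t = d]) /\
  (forall b t, in_iso_class o b -> in_iso_class s t -> b <> t ->
               d <= dist b t).

End Defs.

(* Main.v *)
Require Import Defs.
From mathcomp Require Import all_boot all_fingroup.
From Stdlib Require Import FunctionalExtensionality Classical.

Set Implicit Arguments. Unset Strict Implicit. Unset Printing Implicit Defensive.

Section Aux.
Variable T : finType.

Lemma gcancl (a : T -> T -> T) : is_group_op a -> forall x y y', a x y = a x y' -> y = y'.
Proof.
case=> As [e0 [l0 r0 inv]] x y y' H.
have [z [_ zx]] := inv x.
by rewrite -(l0 y) -(l0 y') -zx -!As H.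
Qed.

Lemma gcancr (a : T -> T -> T) : is_group_op a -> forall x y y', a y x = a y' x -> y = y'.
Proof.
case=> As [e0 [l0 r0 inv]] x y y' H.
have [z [xz _]] := inv x.
by rewrite -(r0 y) -(r0 y') -xz !As H.
Qed.

Lemma conj_group (g : {perm T}) op : is_group_op op -> is_group_op (conj_op g op).
Proof.
case=> As [e0 [l0 r0 inv]]; split.
  by move=> x y z; rewrite /conj_op !permK As.
exists (g e0); split.
- by move=> x; rewrite /conj_op permK l0 permKV.
- by move=> x; rewrite /conj_op permK r0 permKV.
- move=> x; have [z [h1 h2]] := inv (g^-1%g x).
  by exists (g z); rewrite /conj_op !permK h1 h2.
Qed.

Lemma key (a s : T -> T -> T) (e u : T) :
  is_group_op a -> is_group_op s -> left_id u a -> right_id u a ->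
  left_id e s -> right_id e s -> u != e ->
  dist (conj_op (tperm e u) a) s < dist a s.
Proof.
move=> Ga Gs la ra ls rs ue.
set l := tperm e u.
have lV : forall x, (l^-1)%g x = l x by move=> x; rewrite tpermV.
set b := conj_op l a.
have beq : forall x y, b x y = l (a (l x) (l y)) by move=> x y; rewrite /b /conj_op !lV.
set Da := [set p : T * T | a p.1 p.2 != s p.1 p.2].
set Db := [set p : T * T | b p.1 p.2 != s p.1 p.2].
set Ce := [set p : T * T | (p.1 == e) || (p.2 == e)].
set W := [set p : T * T | (p.1 != e) && ((a p.1 p.2 == e) || (a p.1 p.2 == u))].
have eu : e != u by rewrite eq_sym.
have CeDa : Ce \subset Da.
  apply/subsetP => -[x y]; rewrite !inE /= => /orP[] /eqP ->.
    rewrite ls; apply/eqP => H; move/eqP: ue; apply.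
    by apply: (gcancr Ga (x:=y)); rewrite la H.
  rewrite rs; apply/eqP => H; move/eqP: ue; apply.
  by apply: (gcancl Ga (x:=x)); rewrite ra H.
have DbS : Db \subset (Da :\: Ce) :|: W.
  apply/subsetP => -[x y]; rewrite !inE /= beq => Hb.
  have xe : x != e.
    apply/eqP => xe; move: Hb; rewrite xe ls /l tpermL la tpermK eqxx //.
  have ye : y != e.
    apply/eqP => ye; move: Hb; rewrite ye rs /l tpermL ra tpermK eqxx //.
  rewrite (negbTE xe) (negbTE ye) /=.
  case: (boolP (a x y != s x y)) => //= Hxy.
  move: Hxy; rewrite negbK => /eqP Hxy.
  have xu : x != u.
    apply/eqP => xu; move: Hxy; rewrite xu la -{1}(ls y) => H.
    by move: ue; rewrite (gcancr Gs H) eqxx.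
  have yu : y != u.
    apply/eqP => yu; move: Hxy; rewrite yu ra -{1}(rs x) => H.
    by move: ue; rewrite (gcancl Gs H) eqxx.
  apply/negPn/negP => /norP[H1 H2].
  move: Hb; rewrite /l (tpermD (x:=e) (y:=u) (z:=x)) 1?eq_sym //.
  rewrite (tpermD (x:=e) (y:=u) (z:=y)) 1?eq_sym //.
  by rewrite tpermD 1?eq_sym // Hxy eqxx.
pose h (p : T * T) := if a p.1 p.2 == e then (p.1, e) else (e, p.1).
have Wc : #|W| < #|Ce|.
  have -> : #|W| = #|h @: W|.
    apply/esym/card_in_imset => -[x y] [x' y']; rewrite !inE /= /h /=.
    move=> /andP[xe H] /andP[xe' H'].
    case: ifP => E; case: ifP => E' [] //.
    - move=> xx'; subst x'; move: E E' => /eqP E /eqP E'.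
      by congr (_, _); apply: (gcancl Ga (x := x)); rewrite E E'.
    - by move=> xe2; move: xe; rewrite xe2 eqxx.
    - by move=> xe2; move: xe'; rewrite -xe2 eqxx.
    - move=> xx'; subst x'; move: H H'; rewrite E E' /= => /eqP E1 /eqP E2.
      by congr (_, _); apply: (gcancl Ga (x := x)); rewrite E1 E2.
  rewrite (cardsD1 (e, e) Ce) inE eqxx /= add1n ltnS.
  apply: subset_leq_card; apply/subsetP => q /imsetP[[x y] + ->].
  rewrite !inE /= /h => /andP[xe _]; case: ifP => _.
    by rewrite /= xpair_eqE (negbTE xe) eqxx orbT.
  by rewrite /= xpair_eqE (negbTE xe) eqxx andbF.
rewrite /dist -/Da -/Db.
have := cardsID Ce Da; rewrite (setIidPr CeDa) => HD.
have := subset_leq_card DbS.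
have := leq_card_setU (Da :\: Ce) W => -[H _].
move=> H2; rewrite -HD.
apply: (leq_ltn_trans H2); apply: (leq_ltn_trans H).
by rewrite addnC ltn_add2r.
Qed.

End Aux.

Theorem lemma3p3 (T : finType) (o s : T -> T -> T) (e : T) (f : {perm T}) :
  is_group_op o -> is_group_op s ->
  left_id e o -> right_id e o -> left_id e s -> right_id e s ->
  class_dist_is o s (dist (conj_op f o) s) ->
  f e = e \/
  exists x y : T, [/\ x != y,
    conj_op f o = conj_op (tperm x y) s &
    class_dist_is o s (dist (conj_op (tperm x y) s) s)].
Proof.
move=> Go Gs lo ro ls rs H.
case: (eqVneq (f e) e) => fe; [by left | right].
set u := f e.
set a := conj_op f o.
have Ga : is_group_op a by apply: conj_group.
have la : left_id u a by move=> y; rewrite /a /conj_op /u permK lo permKV.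
have ra : right_id u a by move=> y; rewrite /a /conj_op /u permK ro permKV.
set l := tperm e u.
set b := conj_op l a.
have Hb : in_iso_class o b.
  split; first by apply: conj_group.
  by exists (f * l)%g => x y; rewrite /b /a /conj_op !permM !permK.
have Hs : in_iso_class s s.
  by split => //; exists 1%g => x y; rewrite !perm1.
have eu : e != u by rewrite eq_sym.
case: (classic (b = s)) => bs.
  have aE : a = conj_op l s.
    rewrite -bs; apply: functional_extensionality => x.
    apply: functional_extensionality => y.
    by rewrite /b /conj_op !tpermV !tpermK.
  exists e, u; split => //.
  by rewrite -aE.
exfalso.
have H1 := H.2 b s Hb Hs bs.
have K := key Ga Gs la ra ls rs fe.
by have := leq_ltn_trans H1 K; rewrite ltnn.
Qed.
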